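(* There exist a finite $2$-dimensional simplicial complex $K$ embedded in $\mathbb{R}^2$ and a $1$-cycle $c\in Z_1(K;\mathbb{R})$ such that the minimum cardinality of a homological edge cut for $[c]$ is $\mathrm{mc}=3$, while the optimal value of the linear program \[ \widetilde{\mathrm{mc}}=\min\{\|\varphi\|_1:\ \varphi\in C^1(K;\mathbb{R}),\ \partial^*\varphi=0,\ \varphi(c)=1\} \] equals that of its dual $\mathrm{mf}=\max\{r:\ (B,r)\in C_2(K;\mathbb{R})\times\mathbb{R},\ \|\partial B+r c\|_\infty\le1\}$, namely $\widetilde{\mathrm{mc}}=\mathrm{mf}=3/2$. In particular $\mathrm{mf}<\mathrm{mc}$, so the linear programming relaxation is not tight in general.
   Context: For $A\subseteq K$, $K-A$ is the largest subcomplex of $K$ containing no simplex of $A$. $C\subseteq K^{(1)}$ is a homological edge cut for $\gamma\in H_1(K;\mathbb{R})$ if $\gamma\notin\mathrm{Im}(H_1(K-C;\mathbb{R})\to H_1(K;\mathbb{R}))$. $C^1(K;\mathbb{R})=\mathrm{Hom}(C_1(K;\mathbb{R}),\mathbb{R})$ with coboundary $(\partial^*\varphi)(\sigma)=\varphi(\partial\sigma)$; cochains and chains are viewed as vectors in the standard basis of (oriented) simplices, and $\|\cdot\|_1$, $\|\cdot\|_\infty$ are the corresponding $\ell^1$ and $\ell^\infty$ norms. *)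

(* Defs.v *)
From HB Require Import structures.
From mathcomp Require Import all_boot all_order all_algebra.
From Stdlib Require Import Rdefinitions.
From mathcomp Require Import Rstruct.
Set Implicit Arguments. Unset Strict Implicit. Unset Printing Implicit Defensive.
Import Order.TTheory GRing.Theory Num.Theory.
Local Open Scope ring_scope.

Section SimplicialDefs.
Variable n : nat.
Notation V := 'I_n.
Notation cplx := {set {set V}}.

Definition is_complex (K : cplx) : Prop :=
  set0 \notin K /\
  forall s t : {set V}, s \in K -> t \subset s -> t != set0 -> t \in K.

Definition is_2dim (K : cplx) : Prop :=
  (forall s, s \in K -> leq #|s| 3) /\ exists s, s \in K /\ #|s| = 3 :> nat.

(* K - A : the largest subcomplex of K containing no simplex of A
   (union of all subcomplexes L of K disjoint from A) *)
Definition cplx_minus (K A : cplx) : cplx :=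
  [set s in K | [exists L : cplx,
     [&& L \subset K, s \in L, [disjoint L & A] &
        [forall s' : {set V}, forall t : {set V}, [&& s' \in L, t \subset s' & t != set0] ==> (t \in L)]]]].

Definition edges (K : cplx) : {set {set V}} := [set s in K | #|s| == 2 :> nat].
Definition triangles (K : cplx) : {set {set V}} := [set s in K | #|s| == 3 :> nat].

(* real k-chains of K (k-simplices oriented by increasing vertex order),
   and 1-cochains, as functions on vertex sets supported on k-simplices of K *)
Definition is_chain (K : cplx) (k : nat) (c : {set V} -> R) : Prop :=
  forall s, c s != 0 -> s \in K /\ #|s| = k.+1.

(* boundary operator: the face t of (v |: t) has sign (-1)^(position of v) *)
Definition bd (c : {set V} -> R) : {set V} -> R := fun t =>
  \sum_(v : V | v \notin t)
     (-1) ^+ #|[set u in t | ltn (val u) (val v)]| * c (v |: t).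

Definition delta (s : {set V}) : {set V} -> R := fun t => if t == s then 1 else 0.

Definition pair (phi c : {set V} -> R) : R := \sum_(t : {set V}) phi t * c t.

Definition is_cycle (K : cplx) (c : {set V} -> R) : Prop :=
  is_chain K 1 c /\ forall t, bd c t = 0.

(* C is a homological edge cut for [c] in H_1(K;R): [c] is not in the image of
   H_1(K - C;R) -> H_1(K;R), i.e. there is no 1-cycle z of K - C and no
   2-chain B of K with c - z = bd B *)
Definition is_hom_edge_cut (K : cplx) (c : {set V} -> R) (C : cplx) : Prop :=
  C \subset edges K /\
  ~ (exists (z B : {set V} -> R),
        is_cycle (cplx_minus K C) z /\ is_chain K 2 B /\
        forall t, c t - z t = bd B t).

Definition min_cut_is (K : cplx) (c : {set V} -> R) (m : nat) : Prop :=
  (exists C, is_hom_edge_cut K c C /\ #|C| = m) /\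
  (forall C, is_hom_edge_cut K c C -> leq m #|C|).

Definition norm1 (K : cplx) (phi : {set V} -> R) : R :=
  \sum_(e in edges K) `|phi e|.

Definition lp_feasible (K : cplx) (c phi : {set V} -> R) : Prop :=
  is_chain K 1 phi /\
  (forall s, s \in triangles K -> pair phi (bd (delta s)) = 0) /\
  pair phi c = 1.

Definition lp_min_is (K : cplx) (c : {set V} -> R) (x : R) : Prop :=
  (exists phi, lp_feasible K c phi /\ norm1 K phi = x) /\
  (forall phi, lp_feasible K c phi -> x <= norm1 K phi).

Definition dual_feasible (K : cplx) (c B : {set V} -> R) (r : R) : Prop :=
  is_chain K 2 B /\ forall e, e \in edges K -> `|bd B e + r * c e| <= 1.

Definition dual_max_is (K : cplx) (c : {set V} -> R) (x : R) : Prop :=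
  (exists B, dual_feasible K c B x) /\
  (forall B r, dual_feasible K c B r -> r <= x).

Definition in_hull (p : V -> 'rV[R]_2) (s : {set V}) (x : 'rV[R]_2) : Prop :=
  exists lam : V -> R,
    (forall i, 0 <= lam i) /\ (forall i, i \notin s -> lam i = 0) /\
    \sum_i lam i = 1 /\ x = \sum_i lam i *: p i.

Definition aff_indep (p : V -> 'rV[R]_2) (s : {set V}) : Prop :=
  forall mu : V -> R, (forall i, i \notin s -> mu i = 0) ->
    \sum_i mu i = 0 -> \sum_i mu i *: p i = 0 -> forall i, mu i = 0.

Definition embeds_in_R2 (K : cplx) (p : V -> 'rV[R]_2) : Prop :=
  (forall s, s \in K -> aff_indep p s) /\
  (forall s t x, s \in K -> t \in K -> in_hull p s x -> in_hull p t x ->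
      in_hull p (s :&: t) x).

End SimplicialDefs.

(* Main.v *)
Require Import Defs.
From HB Require Import structures.
From mathcomp Require Import all_boot all_order all_algebra.
From Stdlib Require Import Rdefinitions.
From mathcomp Require Import Rstruct.
From mathcomp.algebra_tactics Require Import ring lra.
Set Implicit Arguments. Unset Strict Implicit. Unset Printing Implicit Defensive.
Import Order.TTheory GRing.Theory Num.Theory.
Local Open Scope ring_scope.

Notation V6 := 'I_6.
Definition mk (l : seq nat) : {set V6} := [set i : V6 | (val i \in l)].
Definition eqL (l1 l2 : seq nat) : bool :=
  all (fun k => (k \in l1) == (k \in l2)) (iota 0 6).

Lemma in_mk i l : (i \in mk l) = (val i \in l).
Proof. by rewrite inE. Qed.

Lemma mk_eq l1 l2 : (mk l1 == mk l2) = eqL l1 l2.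
Proof.
apply/eqP/allP => [H k | H].
  rewrite mem_iota add0n => /andP[_ hk].
  by have := congr1 (fun S : {set V6} => Ordinal hk \in S) H; rewrite !in_mk /= => ->.
apply/setP => i; rewrite !in_mk; apply/eqP; apply: H.
by rewrite mem_iota add0n ltn_ord.
Qed.

Lemma mk_cons (k : nat) (l : seq nat) : (k < 6)%nat -> mk (k :: l) = inord k |: mk l.
Proof.
move=> hk; apply/setP => i; rewrite in_setU1 !in_mk inE.
by rewrite -val_eqE /= inordK.
Qed.

Lemma card_mk l : uniq l -> all (fun k => k < 6)%nat l -> #|mk l| = size l.
Proof.
elim: l => [|k l IH] /=.
  by move=> _ _; apply/eqP; rewrite cards_eq0; apply/eqP/setP => i; rewrite in_mk in_nil.
move=> /andP[kl ul] /andP[hk al]; rewrite mk_cons // cardsU1 IH // in_mk /= inordK //.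
by rewrite kl.
Qed.

Definition chainL := seq (int * seq nat).
Definition ev (L : chainL) (t : {set V6}) : R :=
  \sum_(x <- L) (x.1)%:~R * (t == mk x.2)%:R.
Definition gsum (L : chainL) (l : seq nat) : int :=
  \sum_(y <- L | eqL l y.2) y.1.

Lemma ev_cases L t : ev L t = 0 \/ exists2 x, x \in L & (t = mk x.2 /\ ev L t = (gsum L x.2)%:~R).
Proof.
case: (boolP (has (fun x => t == mk x.2) L)) => [/hasP[x xL /eqP tx]|hn].
  right; exists x => //; split => //.
  rewrite /ev /gsum rmorph_sum [RHS]big_mkcond /=; apply: eq_bigr => y _.
  rewrite tx mk_eq; case: (eqL _ _); by rewrite ?mulr1 ?mulr0.
left; rewrite /ev big1_seq // => y /= yL.
have : ~~ (t == mk y.2) by apply: contra hn => h; apply/hasP; exists y.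
by move/negbTE => ->; rewrite mulr0.
Qed.

Lemma ev_zero L t : all (fun x => gsum L x.2 == 0) L -> ev L t = 0.
Proof.
move=> /allP H; case: (ev_cases L t) => // -[x xL [_ ->]].
by rewrite (eqP (H x xL)).
Qed.

Lemma ev_le1 L t : all (fun x => (-1 <= gsum L x.2) && (gsum L x.2 <= 1)) L -> `|ev L t| <= 1.
Proof.
move=> /allP H; case: (ev_cases L t) => [->|[x xL [_ ->]]]; first by rewrite normr0 ler01.
have /andP[h1 h2] := H x xL.
rewrite ler_norml; apply/andP; split.
  by rewrite -(ler_int R) in h1.
by rewrite -(ler_int R) in h2.
Qed.

Lemma ev_supp L t : ev L t != 0 -> exists2 x, x \in L & t = mk x.2.
Proof.
case: (ev_cases L t) => [->|[x xL [tx _]]]; first by rewrite eqxx.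
by move=> _; exists x.
Qed.

Lemma ev_cat A B t : ev (A ++ B) t = ev A t + ev B t.
Proof. by rewrite /ev big_cat. Qed.

Lemma bd_ext (f g : {set V6} -> R) t : (forall s, f s = g s) -> bd f t = bd g t.
Proof. by move=> H; rewrite /bd; apply: eq_bigr => v _; rewrite H. Qed.

Lemma bd_add (f g : {set V6} -> R) t : bd (fun s => f s + g s) t = bd f t + bd g t.
Proof. by rewrite /bd -big_split /=; apply: eq_bigr => v _; rewrite mulrDr. Qed.

Lemma bd_scale (f : {set V6} -> R) a t : bd (fun s => a * f s) t = a * bd f t.
Proof. by rewrite /bd mulr_sumr; apply: eq_bigr => v _; rewrite mulrCA. Qed.

Lemma bd_zero t : bd (fun _ : {set V6} => 0) t = 0.
Proof. by rewrite /bd big1 // => v _; rewrite mulr0. Qed.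

Lemma sum_l (F : nat -> R) (l : seq nat) : uniq l -> all (fun k => (k < 6)%nat) l ->
  \sum_(k <- l) F k = \sum_(v : V6 | val v \in l) F (val v).
Proof.
move=> ul al.
rewrite -(big_mkord (fun k => k \in l) F) -big_filter.
apply: perm_big; apply: uniq_perm => //; first by rewrite filter_uniq // iota_uniq.
move=> k; rewrite mem_filter mem_iota add0n /=.
case kl: (k \in l) => //=; symmetry.
by move/allP: al => /(_ k kl).
Qed.

Definition bd1 (x : int * seq nat) : chainL :=
  [seq (((-1) ^+ (count (fun j => (j < k)%nat) x.2)) * x.1, [seq j <- x.2 | j != k]) | k <- x.2].
Definition bdL (L : chainL) : chainL := flatten (map bd1 L).
Definition wf (L : chainL) : bool :=
  all (fun x => uniq x.2 && all (fun k => (k < 6)%nat) x.2) L.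

Lemma bd_delta (l : seq nat) t : uniq l -> all (fun k => (k < 6)%nat) l ->
  bd (fun s => (s == mk l)%:R) t =
  \sum_(k <- l) (-1) ^+ (count (fun j => (j < k)%nat) l) * (t == mk [seq j <- l | j != k])%:R.
Proof.
move=> ul al; rewrite sum_l // /bd big_mkcond [RHS]big_mkcond /=.
apply: eq_bigr => v _.
have in_f u : (u \in mk [seq j <- l | j != val v]) = (u != v) && (val u \in l).
  by rewrite in_mk mem_filter val_eqE.
case: (boolP (val v \in l)) => vl.
  case: (boolP (t == mk [seq j <- l | j != val v])) => [/eqP tE | tN].
    have vt : v \notin t by rewrite tE in_f eqxx.
    have -> : v |: t == mk l.
      apply/eqP/setP => u; rewrite in_setU1 tE in_f in_mk.
      by case: (eqVneq u v) => [->|] //=.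
    rewrite vt mulr1.
    have -> : [set u in t | (val u < val v)%nat] = mk [seq j <- l | (j < val v)%nat].
      apply/setP => u; rewrite [LHS]inE tE in_f in_mk mem_filter.
      case: (eqVneq u v) => [->|]; first by rewrite ltnn andbF.
      by rewrite andbC.
    rewrite card_mk; [by rewrite size_filter mulr1 | exact: filter_uniq |].
    by apply/allP => k; rewrite mem_filter => /andP[_ kl]; exact: (allP al k kl).
  rewrite mulr0; case vt: (v \notin t) => //.
  case: (boolP (v |: t == mk l)) => [/eqP E|]; last by rewrite mulr0.
  exfalso; move/negP: tN; apply; apply/eqP/setP => u.
  rewrite in_f -in_mk -E in_setU1.
  case: (eqVneq u v) => [->|] //=.
  by rewrite (negbTE vt).
case: (v \notin t) => //.
case: (boolP (v |: t == mk l)) => [/eqP E|]; last by rewrite mulr0.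
by move: vl; rewrite -in_mk -E in_setU1 eqxx.
Qed.

Lemma ev_bd1 x t : ev (bd1 x) t =
  x.1%:~R * \sum_(k <- x.2) (-1) ^+ (count (fun j => (j < k)%nat) x.2) * (t == mk [seq j <- x.2 | j != k])%:R.
Proof.
rewrite /ev /bd1 big_map mulr_sumr; apply: eq_bigr => k _ /=.
by rewrite rmorphM /= rmorphXn /= rmorphN1 mulrA [_ * x.1%:~R]mulrC.
Qed.

Lemma bd_ev L t : wf L -> bd (ev L) t = ev (bdL L) t.
Proof.
elim: L t => [|x L IH] t /=.
  by move=> _; rewrite (@bd_ext _ (fun _ => 0)) ?bd_zero /ev ?big_nil // => s; rewrite big_nil.
move=> /andP[/andP[ux ax] wL].
rewrite (@bd_ext _ (fun s => x.1%:~R * (s == mk x.2)%:R + ev L s)); last first.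
  by move=> s; rewrite /ev big_cons.
rewrite bd_add bd_scale IH // ev_cat ev_bd1 bd_delta //.
Qed.

Section Gen.
Variable n : nat.
Implicit Types (K C : {set {set 'I_n}}) (phi f g B : {set 'I_n} -> R).

Lemma cm_notin K C s : s \in cplx_minus K C -> s \notin C.
Proof.
rewrite inE => /andP[_ /existsP[L /and4P[_ sL dLC _]]].
by rewrite (disjointFr dLC sL).
Qed.

Lemma cm_in K C s : is_complex K -> C \subset edges K -> s \in K -> #|s| = 2 :> nat ->
  s \notin C -> s \in cplx_minus K C.
Proof.
move=> [_ hcl] CE sK s2 sC.
rewrite inE sK /=; apply/existsP; exists [set t : {set 'I_n} | (t \subset s) && (t != set0)].
have sn : s != set0 by rewrite -card_gt0 s2.
apply/and4P; split.
- apply/subsetP => t; rewrite inE => /andP[ts tn]; exact: hcl sK ts tn.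
- by rewrite inE subxx sn.
- rewrite disjoints_subset; apply/subsetP => t; rewrite inE => /andP[ts tn].
  rewrite inE; apply/negP => tC.
  have : t \in edges K by exact: (subsetP CE).
  rewrite inE => /andP[_ /eqP t2].
  have : t == s by rewrite eqEcard ts s2 t2.
  by move/eqP => E; move: tC; rewrite E (negbTE sC).
- apply/forallP => s'; apply/forallP => t; apply/implyP => /and3P[].
  rewrite !inE => /andP[s's _] ts' tn; rewrite tn andbT.
  exact: subset_trans ts' s's.
Qed.

Lemma pair_ext phi f g : (forall t, f t = g t) -> pair phi f = pair phi g.
Proof. by move=> H; rewrite /pair; apply: eq_bigr => t _; rewrite H. Qed.

Lemma pair_sub phi f g : pair phi (fun t => f t - g t) = pair phi f - pair phi g.
Proof. by rewrite /pair -sumrB; apply: eq_bigr => t _; rewrite mulrBr. Qed.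

Lemma pair_add phi f g : pair phi (fun t => f t + g t) = pair phi f + pair phi g.
Proof. by rewrite /pair -big_split; apply: eq_bigr => t _; rewrite mulrDr. Qed.

Lemma pair_scale phi f a : pair phi (fun t => a * f t) = a * pair phi f.
Proof. by rewrite /pair mulr_sumr; apply: eq_bigr => t _; rewrite mulrCA. Qed.

Lemma pair_edges K phi g : is_chain K 1 phi ->
  pair phi g = \sum_(e in edges K) phi e * g e.
Proof.
move=> hc; rewrite /pair [RHS]big_mkcond; apply: eq_bigr => t _.
case: (boolP (t \in edges K)) => // tE.
case: (eqVneq (phi t) 0) => [->|]; first by rewrite mul0r.
move=> /hc [tK t2]; by move: tE; rewrite inE tK t2 eqxx.
Qed.

Lemma bd_sum (I : finType) (F : I -> {set 'I_n} -> R) t :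
  bd (fun s => \sum_i F i s) t = \sum_i bd (F i) t.
Proof.
rewrite /bd exchange_big /=; apply: eq_bigr => v _; rewrite mulr_sumr //.
Qed.

Lemma cocycle_bd K phi B : (forall s, s \in triangles K -> pair phi (bd (delta s)) = 0) ->
  is_chain K 2 B -> pair phi (bd B) = 0.
Proof.
move=> hphi hB.
have E t : bd B t = \sum_T B T * bd (delta T) t.
  rewrite (eq_bigr (fun T => bd (fun s => B T * delta T s) t)); last first.
    by move=> T _; rewrite /bd mulr_sumr; apply: eq_bigr => v _; rewrite mulrCA.
  rewrite -bd_sum /bd; apply: eq_bigr => v _; congr (_ * _); set s := v |: t.
  rewrite (bigD1 s) //= big1 => [|T TS]; first by rewrite /delta eqxx mulr1 addr0.
  by rewrite /delta eq_sym (negbTE TS) mulr0.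
rewrite (pair_ext phi E) /pair.
rewrite (eq_bigr (fun t => \sum_T B T * (phi t * bd (delta T) t))); last first.
  by move=> t _; rewrite mulr_sumr; apply: eq_bigr => T _; rewrite mulrCA.
rewrite exchange_big big1 // => T _.
rewrite -mulr_sumr.
case: (eqVneq (B T) 0) => [->|]; first by rewrite mul0r.
move=> /hB [TK T3].
have -> : \sum_i phi i * bd (delta T) i = pair phi (bd (delta T)) by [].
by rewrite hphi ?mulr0 // inE TK T3 eqxx.
Qed.

Lemma weak_dual K c phi B r : lp_feasible K c phi -> dual_feasible K c B r -> r <= norm1 K phi.
Proof.
move=> [hch [hcoc hc1]] [hB hle].
have -> : r = pair phi (fun t => bd B t + r * c t).
  by rewrite pair_add pair_scale hc1 mulr1 (cocycle_bd hcoc hB) add0r.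
rewrite (pair_edges _ hch) /norm1.
apply: ler_sum => e eE.
apply: le_trans (ler_norm _) _.
rewrite normrM; apply: ler_piMr => //; exact: hle.
Qed.

End Gen.

Definition tris : seq (seq nat) :=
  [:: [:: 0; 1; 3]; [:: 1; 3; 4]; [:: 1; 2; 4]; [:: 2; 4; 5]; [:: 0; 2; 5]; [:: 0; 3; 5]]%nat.
Definition Kc : {set {set V6}} :=
  [set s : {set V6} | (s != set0) && has (fun T => s \subset mk T) tris].

Lemma mk_nil : mk [::] = set0.
Proof. by apply/setP => i; rewrite in_mk in_nil. Qed.

Definition subL (l1 l2 : seq nat) := all (fun k => (k \in l1) ==> (k \in l2)) (iota 0 6).

Lemma subset_mk l1 l2 : (mk l1 \subset mk l2) = subL l1 l2.
Proof.
apply/subsetP/allP => [H k | H i].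
  rewrite mem_iota add0n => /andP[_ hk]; apply/implyP => kl.
  by have := H (Ordinal hk); rewrite !in_mk; apply.
rewrite !in_mk => il; have := H (val i); rewrite mem_iota add0n ltn_ord => /(_ isT).
by rewrite il.
Qed.

Definition inKb (l : seq nat) : bool := ~~ eqL l [::] && has (subL l) tris.

Lemma inK l : (mk l \in Kc) = inKb l.
Proof.
rewrite inE -mk_nil mk_eq; congr (_ && _); apply: eq_has => T; exact: subset_mk.
Qed.

Definition okL (k : nat) (L : chainL) : bool :=
  all (fun x => [&& inKb x.2, uniq x.2, all (fun j => (j < 6)%nat) x.2 & size x.2 == k.+1]) L.

Lemma chain_ev k L : okL k L -> is_chain Kc k (ev L).
Proof.
move=> /allP H s /ev_supp [x xL ->].
have /and4P[h1 h2 h3 /eqP h4] := H x xL.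
by rewrite inK card_mk.
Qed.

Definition scaleL (a : int) (L : chainL) : chainL := [seq (a * x.1, x.2) | x <- L].

Lemma ev_scale a L t : ev (scaleL a L) t = a%:~R * ev L t.
Proof.
by rewrite /ev big_map mulr_sumr; apply: eq_bigr => x _; rewrite /= rmorphM mulrA.
Qed.

Lemma sum_ind (g : {set V6} -> R) a : \sum_t (t == a)%:R * g t = g a.
Proof.
rewrite (bigD1 a) //= eqxx mul1r big1 ?addr0 // => t /negbTE ->; by rewrite mul0r.
Qed.

Definition pairZ (A B : chainL) : int :=
  \sum_(x <- A) \sum_(y <- B) x.1 * y.1 * (eqL x.2 y.2)%:R.

Lemma pair_ev A B : pair (ev A) (ev B) = (pairZ A B)%:~R.
Proof.
rewrite /pair /pairZ /ev.
rewrite (eq_bigr (fun t => \sum_(x <- A) \sum_(y <- B)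
     (x.1%:~R * y.1%:~R) * ((t == mk x.2)%:R * (t == mk y.2)%:R))); last first.
  move=> t _; rewrite big_distrl; apply: eq_bigr => x _ /=.
  rewrite big_distrr; apply: eq_bigr => y _ /=.
  by rewrite mulrACA.
rewrite [LHS]exchange_big rmorph_sum; apply: eq_bigr => x _.
rewrite [LHS]exchange_big rmorph_sum; apply: eq_bigr => y _.
rewrite -mulr_sumr sum_ind -mk_eq rmorphM /= rmorphM /=.
by case: (mk x.2 == mk y.2).
Qed.

Definition sumAbs (L : chainL) : int := \sum_(x <- L) `|x.1|.

Lemma ev_norm_sum L : \sum_(e : {set V6}) `|ev L e| <= (sumAbs L)%:~R.
Proof.
have E : \sum_(e : {set V6}) \sum_(x <- L) `|x.1%:~R| * (e == mk x.2)%:R = (sumAbs L)%:~R :> R.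
  rewrite exchange_big /sumAbs rmorph_sum; apply: eq_bigr => x _ /=.
  rewrite (eq_bigr (fun e => (e == mk x.2)%:R * `|x.1%:~R|)); last by move=> e _; rewrite mulrC.
  by rewrite sum_ind intr_norm.
rewrite -E; apply: ler_sum => e _; rewrite /ev.
apply: le_trans (ler_norm_sum _ _ _) _.
by apply: ler_sum => x _; rewrite normrM normr_nat.
Qed.

Definition Lg : chainL := [:: (1, [:: 0; 1]%nat); (1, [:: 1; 2]%nat); (-1, [:: 0; 2]%nat)]. 
Definition Lc : chainL := scaleL 2 Lg.
Definition Lzz : chainL := [:: (1, [:: 0; 3]%nat); (-1, [:: 1; 3]%nat); (1, [:: 1; 4]%nat);
   (-1, [:: 2; 4]%nat); (1, [:: 2; 5]%nat); (-1, [:: 0; 5]%nat)]. 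
Definition Bzz : chainL := [:: (1, [:: 0; 1; 3]%nat); (1, [:: 1; 2; 4]%nat); (-1, [:: 0; 2; 5]%nat)]. 
Definition Lo : chainL := [:: (1, [:: 3; 4]%nat); (1, [:: 4; 5]%nat); (-1, [:: 3; 5]%nat)]. 
Definition Bo : chainL := [:: (1, [:: 0; 1; 3]%nat); (-1, [:: 1; 3; 4]%nat); (1, [:: 1; 2; 4]%nat);
   (-1, [:: 2; 4; 5]%nat); (-1, [:: 0; 2; 5]%nat); (1, [:: 0; 3; 5]%nat)]. 
Definition Bstar : chainL := scaleL (-1) (Bzz ++ Bo).
Definition Lphi : chainL := [:: (1, [:: 0; 1]%nat); (-1, [:: 1; 3]%nat); (1, [:: 3; 4]%nat)]. 

Definition zerochk (L : chainL) := all (fun x => gsum L x.2 == 0) L.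
Definition le1chk (L : chainL) := all (fun x => (-1 <= gsum L x.2) && (gsum L x.2 <= 1)) L.



Lemma Kc_complex : is_complex Kc.
Proof.
split; first by rewrite inE eqxx.
move=> s t; rewrite !inE => /andP[_ /hasP[T TT sT]] ts tn; rewrite tn.
by apply/hasP; exists T => //; exact: subset_trans ts sT.
Qed.

Lemma tris_ok : all (fun T => [&& uniq T, all (fun j => (j < 6)%nat) T & size T == 3]) tris.
Proof. by []. Qed.

Lemma Kc_face s : s \in Kc -> exists2 T, T \in tris & s \subset mk T.
Proof. by rewrite inE => /andP[_ /hasP[T TT sT]]; exists T. Qed.

Lemma card_tri T : T \in tris -> #|mk T| = 3%nat.
Proof.
by move=> TT; have /and3P[h1 h2 /eqP h3] := allP tris_ok T TT; rewrite card_mk.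
Qed.

Lemma Kc_2dim : is_2dim Kc.
Proof.
split.
  move=> s /Kc_face [T TT sT]; apply: leq_trans (subset_leq_card sT) _; by rewrite card_tri.
exists (mk [:: 0; 1; 3]%nat); split; first by rewrite inK.
by rewrite card_mk.
Qed.

Lemma tri_enum s : s \in triangles Kc -> exists2 T, T \in tris & s = mk T.
Proof.
rewrite inE => /andP[/Kc_face [T TT sT] /eqP s3]; exists T => //.
by apply/eqP; rewrite eqEcard sT card_tri // s3.
Qed.

Definition cc : {set V6} -> R := ev Lc.

Lemma cc_cycle : is_cycle Kc cc.
Proof.
split; first by apply: chain_ev.
by move=> t; rewrite bd_ev // ev_zero // /gsum unlock.
Qed.

Definition phis : {set V6} -> R := fun t => 2^-1 * ev Lphi t.

Lemma pair_scalel (f g : {set V6} -> R) a : pair (fun t => a * f t) g = a * pair f g.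
Proof. by rewrite /pair mulr_sumr; apply: eq_bigr => t _; rewrite mulrA. Qed.

Lemma delta_ev T t : delta (mk T) t = ev [:: (1, T)] t.
Proof. by rewrite /delta /ev big_cons big_nil /= mul1r addr0; case: (t == mk T). Qed.

Lemma phis_feas : lp_feasible Kc cc phis.
Proof.
split.
  move=> s; rewrite /phis mulf_eq0 negb_or => /andP[_]; exact: chain_ev.
split.
  move=> s /tri_enum [T TT ->]; rewrite pair_scalel.
  rewrite (pair_ext _ (fun t => (bd_ext t (delta_ev T)))).
  have wT : wf [:: (1, T)] by have /and3P[h1 h2 _] := allP tris_ok T TT; rewrite /wf /= h1 h2.
  rewrite (pair_ext _ (fun t => bd_ev t wT)) pair_ev.
  have : all (fun T => pairZ Lphi (bdL [:: (1, T)]) == 0) tris by rewrite /pairZ unlock.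
  by move/allP => /(_ T TT) /eqP ->; rewrite mulr0.
rewrite /cc pair_scalel pair_ev.
have -> : pairZ Lphi Lc = 2 by apply/eqP; rewrite /pairZ unlock.
by rewrite -[2%:~R]/(2%:R) mulVf // pnatr_eq0.
Qed.

Lemma phis_norm : norm1 Kc phis <= 3%:R / 2%:R.
Proof.
rewrite /norm1.
apply: le_trans (_ : \sum_(e : {set V6}) `|phis e| <= _).
  rewrite [X in _ <= X](bigID (fun e => e \in edges Kc)) /= lerDl.
  by apply: sumr_ge0 => e _.
rewrite (eq_bigr (fun e => 2^-1 * `|ev Lphi e|)); last first.
  by move=> e _; rewrite /phis normrM ger0_norm // invr_ge0 ler0n.
rewrite -mulr_sumr mulrC ler_pM2r ?invr_gt0 ?ltr0n //.
apply: le_trans (ev_norm_sum Lphi) _.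
have -> : sumAbs Lphi = 3 by rewrite /sumAbs unlock.
by [].
Qed.

Definition Bs : {set V6} -> R := ev Bstar.

Lemma Bs_feas : dual_feasible Kc cc Bs (3%:R / 2%:R).
Proof.
split; first by apply: chain_ev.
move=> e _.
have -> : bd Bs e + 3%:R / 2%:R * cc e = ev (bdL Bstar ++ scaleL 3 Lg) e.
  rewrite ev_cat bd_ev // /cc /Lc !ev_scale; congr (_ + _).
  rewrite mulrA; congr (_ * _); rewrite -[2%:~R]/(2%:R) -[3%:~R]/(3%:R).
  by rewrite mulfVK // pnatr_eq0.
by apply: ev_le1; rewrite /gsum unlock.
Qed.

Definition C0 : {set {set V6}} := [set mk [:: 0; 1]%nat; mk [:: 1; 3]%nat; mk [:: 3; 4]%nat].

Lemma in_edges l : (mk l \in edges Kc) = inKb l && (#|mk l| == 2%nat).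
Proof. by rewrite /edges in_set inK. Qed.

Lemma inC0 s : s \in C0 -> [\/ s = mk [:: 0; 1]%nat, s = mk [:: 1; 3]%nat | s = mk [:: 3; 4]%nat].
Proof. by rewrite !inE => /orP[/orP[]|]/eqP->; [constructor 1|constructor 2|constructor 3]. Qed.

Lemma C0_edges : C0 \subset edges Kc.
Proof.
apply/subsetP => s /inC0 [] ->; by rewrite in_edges card_mk.
Qed.

Lemma C0_card : #|C0| = 3%nat.
Proof. by rewrite /C0 setUC cardsU1 cards2 in_set2 !mk_eq. Qed.

Lemma phis_supp t : phis t != 0 -> t \in C0.
Proof.
rewrite /phis mulf_eq0 negb_or => /andP[_ /ev_supp [x xL ->]].
by move: xL; rewrite !inE => /or3P[]/eqP->; rewrite eqxx ?orbT.
Qed.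

Lemma C0_cut : is_hom_edge_cut Kc cc C0.
Proof.
split; first exact: C0_edges.
move=> [z [B [[zch zbd] [hB hE]]]].
have [_ [hcoc hc1]] := phis_feas.
have := pair_ext phis hE.
rewrite (cocycle_bd hcoc hB) pair_sub hc1.
have -> : pair phis z = 0.
  rewrite /pair big1 // => t _.
  case: (eqVneq (phis t) 0) => [->|/phis_supp tC]; first by rewrite mul0r.
  case: (eqVneq (z t) 0) => [->|/zch [tK _]]; first by rewrite mulr0.
  by move: (cm_notin tK); rewrite tC.
by rewrite subr0 => /eqP; rewrite oner_eq0.
Qed.

Lemma not_cut (Lz LB : chainL) (C : {set {set V6}}) : okL 1 Lz -> zerochk (bdL Lz) -> wf Lz -> okL 2 LB -> wf LB ->
  zerochk (Lc ++ scaleL (-1) Lz ++ scaleL (-1) (bdL LB)) ->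
  all (fun x => mk x.2 \notin C) Lz -> ~ is_hom_edge_cut Kc cc C.
Proof.
move=> oz zz wz oB wB zE aC [CE]; apply; exists (ev Lz), (ev LB); split.
  split; last by move=> t; rewrite bd_ev // ev_zero.
  move=> s /ev_supp [x xL ->].
  have /and4P[h1 h2 h3 /eqP h4] := allP oz x xL.
  have h5 : #|mk x.2| = 2%nat by rewrite card_mk.
  split => //; apply: cm_in => //; first exact: Kc_complex.
    by rewrite inK.
  exact: (allP aC x xL).
split; first exact: chain_ev.
move=> t; have := ev_zero t zE.
rewrite !ev_cat !ev_scale -bd_ev // rmorphN1 /cc /Lc ev_scale => H; lra.
Qed.

Lemma has_cut (Lz LB : chainL) (C : {set {set V6}}) : is_hom_edge_cut Kc cc C ->
  okL 1 Lz -> zerochk (bdL Lz) -> wf Lz -> okL 2 LB -> wf LB ->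
  zerochk (Lc ++ scaleL (-1) Lz ++ scaleL (-1) (bdL LB)) ->
  exists2 x, x \in Lz & mk x.2 \in C.
Proof.
move=> hC h1 h2 h3 h4 h5 h6.
case: (boolP (all (fun x => mk x.2 \notin C) Lz)) => [aC|].
  by exfalso; exact: (not_cut h1 h2 h3 h4 h5 h6 aC hC).
by rewrite -has_predC => /hasP [x xL /negPn xC]; exists x.
Qed.

Definition Lz2 : chainL := scaleL 2 Lzz.
Definition Lz3 : chainL := scaleL 2 Lo.

Lemma disj12 : all (fun a => all (fun b => ~~ eqL a.2 b.2) Lz2) Lc.
Proof. by []. Qed.
Lemma disj13 : all (fun a => all (fun b => ~~ eqL a.2 b.2) Lz3) Lc.
Proof. by []. Qed.
Lemma disj23 : all (fun a => all (fun b => ~~ eqL a.2 b.2) Lz3) Lz2.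
Proof. by []. Qed.

Lemma cut_ge3 C : is_hom_edge_cut Kc cc C -> (3 <= #|C|)%nat.
Proof.
move=> hC.
have a1 : zerochk (bdL Lc) by rewrite /zerochk /gsum unlock.
have b1 : zerochk (Lc ++ scaleL (-1) Lc ++ scaleL (-1) (bdL [::])) by rewrite /zerochk /gsum unlock.
have a2 : zerochk (bdL Lz2) by rewrite /zerochk /gsum unlock.
have b2 : zerochk (Lc ++ scaleL (-1) Lz2 ++ scaleL (-1) (bdL (scaleL 2 Bzz))) by rewrite /zerochk /gsum unlock.
have a3 : zerochk (bdL Lz3) by rewrite /zerochk /gsum unlock.
have b3 : zerochk (Lc ++ scaleL (-1) Lz3 ++ scaleL (-1) (bdL (scaleL 2 Bo))) by rewrite /zerochk /gsum unlock.
have [x1 x1L x1C] := @has_cut Lc [::] C hC isT a1 isT isT isT b1.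
have [x2 x2L x2C] := @has_cut Lz2 (scaleL 2 Bzz) C hC isT a2 isT isT isT b2.
have [x3 x3L x3C] := @has_cut Lz3 (scaleL 2 Bo) C hC isT a3 isT isT isT b3.
have n12 : mk x1.2 != mk x2.2 by rewrite mk_eq (allP (allP disj12 x1 x1L) x2 x2L).
have n13 : mk x1.2 != mk x3.2 by rewrite mk_eq (allP (allP disj13 x1 x1L) x3 x3L).
have n23 : mk x2.2 != mk x3.2 by rewrite mk_eq (allP (allP disj23 x2 x2L) x3 x3L).
have sub : mk x1.2 |: [set mk x2.2; mk x3.2] \subset C.
  apply/subsetP => s /setU1P [->|/set2P [->|->]] //.
apply: leq_trans (subset_leq_card sub).
by rewrite cardsU1 cards2 in_set2 (negbTE n12) (negbTE n13) n23.
Qed.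

Lemma mc3 : min_cut_is Kc cc 3.
Proof.
split; last exact: cut_ge3.
by exists C0; split; [exact: C0_cut | exact: C0_card].
Qed.

Definition Xz (k : nat) : int := nth 0 [:: 0; -2; 2; -6; 0; 6] k.
Definition Yz (k : nat) : int := nth 0 [:: 2; -1; -1; 3; -6; 3] k.

Definition pp (i : V6) : 'rV[R]_2 :=
  \row_(j < 2) (if (val j == 0)%nat then (Xz (val i))%:~R else (Yz (val i))%:~R).

Lemma pp0 i : pp i ord0 ord0 = (Xz (val i))%:~R.
Proof. by rewrite mxE. Qed.
Lemma pp1 i : pp i ord0 ord_max = (Yz (val i))%:~R.
Proof. by rewrite mxE. Qed.

Definition G (a b c : R) (y : 'rV[R]_2) := a * y ord0 ord0 + b * y ord0 ord_max + c.

Lemma G_comb (lam : V6 -> R) a b c : \sum_i lam i = 1 ->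
  G a b c (\sum_i lam i *: pp i) = \sum_i lam i * G a b c (pp i).
Proof.
move=> H; rewrite /G !summxE.
transitivity (\sum_i (a * (lam i * pp i ord0 ord0) + b * (lam i * pp i ord0 ord_max) + c * lam i)).
  rewrite !big_split /= -!mulr_sumr H mulr1; congr (_ * _ + _ * _ + _).
    by apply: eq_bigr => i _; rewrite mxE.
  by apply: eq_bigr => i _; rewrite mxE.
by apply: eq_bigr => i _; ring.
Qed.

Lemma sep_hull (s t : {set V6}) a b c x :
  (forall i, i \in s -> G a b c (pp i) <= 0) ->
  (forall i, i \in t -> 0 <= G a b c (pp i)) ->
  (forall i, i \in s -> G a b c (pp i) = 0 -> i \in t) ->
  in_hull pp s x -> in_hull pp t x -> in_hull pp (s :&: t) x.
Proof.
move=> hs ht hz [lam [l0 [lout [l1 lx]]]] [mu [m0 [mout [m1 mx]]]].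
have e1 : G a b c x = \sum_i lam i * G a b c (pp i) by rewrite lx G_comb.
have e2 : G a b c x = \sum_i mu i * G a b c (pp i) by rewrite mx G_comb.
have le1 : \sum_i lam i * G a b c (pp i) <= 0.
  apply: sumr_le0 => i _; case: (boolP (i \in s)) => iS.
    by rewrite mulr_ge0_le0 // hs.
  by rewrite lout // mul0r.
have ge2 : 0 <= \sum_i mu i * G a b c (pp i).
  apply: sumr_ge0 => i _; case: (boolP (i \in t)) => iT.
    by rewrite mulr_ge0 // ht.
  by rewrite mout // mul0r.
have z : \sum_i - (lam i * G a b c (pp i)) = 0.
  rewrite sumrN; apply/eqP; rewrite oppr_eq0; apply/eqP/le_anti.
  by rewrite le1 /= -e1 e2.
have hpos : forall i, true -> 0 <= - (lam i * G a b c (pp i)).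
  move=> i _; case: (boolP (i \in s)) => iS; first by rewrite oppr_ge0 mulr_ge0_le0 // hs.
  by rewrite lout // mul0r oppr0.
have zt := psumr_eq0P hpos z.
exists lam; split => //; split => //.
move=> i; rewrite inE negb_and => /orP[ns|nt]; first exact: lout.
case: (boolP (i \in s)) => [iS|]; last exact: lout.
have := zt i isT; move/eqP; rewrite oppr_eq0 mulf_eq0 => /orP[/eqP //|/eqP Gz].
by move: (hz i iS Gz); rewrite (negbTE nt).
Qed.

Lemma hull_sub (s T : {set V6}) x : s \subset T -> in_hull pp s x -> in_hull pp T x.
Proof.
move=> sT [lam [l0 [lout [l1 lx]]]]; exists lam; split => //; split => //.
move=> i iT; apply: lout; apply: contra iT; exact: (subsetP sT).
Qed.

Lemma aff_sub (s T : {set V6}) : s \subset T -> aff_indep pp T -> aff_indep pp s.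
Proof.
move=> sT hT mu hout; apply: hT => i iT; apply: hout; apply: contra iT; exact: (subsetP sT).
Qed.

Lemma transfer (s t T1 T2 : {set V6}) x : s \subset T1 -> t \subset T2 ->
  aff_indep pp T1 -> aff_indep pp T2 ->
  (in_hull pp T1 x -> in_hull pp T2 x -> in_hull pp (T1 :&: T2) x) ->
  in_hull pp s x -> in_hull pp t x -> in_hull pp (s :&: t) x.
Proof.
move=> sT tT a1 a2 P hs ht.
have [nu [n0 [nout [n1 nx]]]] := P (hull_sub sT hs) (hull_sub tT ht).
move: hs ht => [lam [l0 [lout [l1 lx]]]] [mu [m0 [mout [m1 mx]]]].
have eql : forall i, nu i = lam i.
  move=> i; apply/eqP; rewrite -subr_eq0; apply/eqP; move: i.
  apply: (a1 (fun i => nu i - lam i)).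
  - move=> i iT; rewrite nout ?lout ?subr0 //; last by rewrite inE negb_and iT.
    by apply: contra iT; exact: (subsetP sT).
  - by rewrite sumrB n1 l1 subrr.
  - rewrite (eq_bigr (fun i => nu i *: pp i - lam i *: pp i)); last by move=> i _; rewrite scalerBl.
    by rewrite sumrB -nx -lx subrr.
have eqm : forall i, nu i = mu i.
  move=> i; apply/eqP; rewrite -subr_eq0; apply/eqP; move: i.
  apply: (a2 (fun i => nu i - mu i)).
  - move=> i iT; rewrite nout ?mout ?subr0 //; last by rewrite inE negb_and iT orbT.
    by apply: contra iT; exact: (subsetP tT).
  - by rewrite sumrB n1 m1 subrr.
  - rewrite (eq_bigr (fun i => nu i *: pp i - mu i *: pp i)); last by move=> i _; rewrite scalerBl.
    by rewrite sumrB -nx -mx subrr.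
exists nu; split => //; split => //.
move=> i; rewrite inE negb_and => /orP[ns|nt]; first by rewrite eql lout.
by rewrite eqm mout.
Qed.

Definition Gz (a b c : int) (k : nat) : int := a * Xz k + b * Yz k + c.

Definition sepchk (T1 T2 : seq nat) (abc : int * int * int) : bool :=
  let: (a, b, c) := abc in
  all (fun k => [&& (k \in T1) ==> (Gz a b c k <= 0), (k \in T2) ==> (0 <= Gz a b c k)
                  & (k \in T1) ==> ((Gz a b c k != 0) || (k \in T2))]) (iota 0 6).

Lemma G_pp a b c i : G a%:~R b%:~R c%:~R (pp i) = (Gz a b c (val i))%:~R.
Proof. by rewrite /G pp0 pp1 /Gz !rmorphD /= !rmorphM. Qed.

Lemma sepchk_ok T1 T2 abc x : sepchk T1 T2 abc ->
  in_hull pp (mk T1) x -> in_hull pp (mk T2) x -> in_hull pp (mk T1 :&: mk T2) x.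
Proof.
case: abc => [[a b] c] /allP H.
have Hk (i : V6) : _ := H (val i) (ltac:(by rewrite mem_iota add0n ltn_ord)).
apply: (@sep_hull _ _ a%:~R b%:~R c%:~R) => i; rewrite G_pp in_mk;
  have /and3P[h1 h2 h3] := Hk i.
- by move=> iT; move: h1; rewrite iT /= lerz0.
- by move=> iT; move: h2; rewrite iT /= ler0z.
- move=> iT /eqP; rewrite intr_eq0 in_mk => /eqP z; move: h3; rewrite iT z /=.
  by [].
Qed.

Lemma solve3 (mi mj mk xi xj xk yi yj yk : R) :
  mi + mj + mk = 0 -> mi * xi + mj * xj + mk * xk = 0 -> mi * yi + mj * yj + mk * yk = 0 ->
  (xj * yk - xk * yj) - (xi * yk - xk * yi) + (xi * yj - xj * yi) != 0 -> mi = 0.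
Proof.
move=> e1 e2 e3 hD.
have : mi * ((xj * yk - xk * yj) - (xi * yk - xk * yi) + (xi * yj - xj * yi))
   = (xj * yk - xk * yj) * (mi + mj + mk) + (yj - yk) * (mi * xi + mj * xj + mk * xk)
     + (xk - xj) * (mi * yi + mj * yj + mk * yk) by ring.
rewrite e1 e2 e3 !mulr0 !addr0 => /eqP; rewrite mulf_eq0 (negbTE hD) orbF => /eqP //.
Qed.

Lemma sum3 (g : V6 -> R) (i j k : nat) : uniq [:: i; j; k] -> all (fun l => (l < 6)%nat) [:: i; j; k] ->
  (forall l, l \notin mk [:: i; j; k] -> g l = 0) ->
  \sum_l g l = g (inord i) + g (inord j) + g (inord k).
Proof.
move=> u a H.
have := sum_l (fun l => g (inord l)) u a.
rewrite !big_cons big_nil addr0 addrA => ->.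
rewrite [RHS]big_mkcond; apply: eq_bigr => l _; rewrite inord_val.
by case: ifP => // hl; rewrite H // in_mk hl.
Qed.

Definition Dz (i j k : nat) : int :=
  (Xz j * Yz k - Xz k * Yz j) - (Xz i * Yz k - Xz k * Yz i) + (Xz i * Yz j - Xz j * Yz i).

Definition affchk (T : seq nat) : bool :=
  if T is [:: i; j; k] then [&& uniq T, all (fun l => (l < 6)%nat) T & Dz i j k != 0] else false.

Lemma aff_ok T : affchk T -> aff_indep pp (mk T).
Proof.
case: T => [|i [|j [|k [|]]]] //= /and3P[u a hD] mu hout hs hv.
have u' : uniq [:: i; j; k] by [].
have s1 := sum3 u a hout.
have e1 : mu (inord i) + mu (inord j) + mu (inord k) = 0 by rewrite -s1.
have ex : mu (inord i) * (Xz i)%:~R + mu (inord j) * (Xz j)%:~R + mu (inord k) * (Xz k)%:~R = 0.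
  have := congr1 (fun M : 'rV[R]_2 => M ord0 ord0) hv; rewrite summxE mxE.
  rewrite (@sum3 (fun l => (mu l *: pp l) ord0 ord0) i j k) //; last first.
    by move=> l hl; rewrite mxE hout // mul0r.
  move: (a) => /= /and4P[ai aj ak _].
  by rewrite !mxE /= !inordK.
have ey : mu (inord i) * (Yz i)%:~R + mu (inord j) * (Yz j)%:~R + mu (inord k) * (Yz k)%:~R = 0.
  have := congr1 (fun M : 'rV[R]_2 => M ord0 ord_max) hv; rewrite summxE mxE.
  rewrite (@sum3 (fun l => (mu l *: pp l) ord0 ord_max) i j k) //; last first.
    by move=> l hl; rewrite mxE hout // mul0r.
  move: (a) => /= /and4P[ai aj ak _].
  by rewrite !mxE /= !inordK.
have hD' : forall (p q r : nat), Dz p q r != 0 ->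
    ((Xz q)%:~R * (Yz r)%:~R - (Xz r)%:~R * (Yz q)%:~R) - ((Xz p)%:~R * (Yz r)%:~R - (Xz r)%:~R * (Yz p)%:~R)
    + ((Xz p)%:~R * (Yz q)%:~R - (Xz q)%:~R * (Yz p)%:~R) != 0 :> R.
  move=> p q r; rewrite -(intr_eq0 R) /Dz; apply: contra => /eqP h; apply/eqP; rewrite -h.
  by rewrite intrD intrB !intrB !intrM.
have Dji : Dz j k i != 0 by move: hD; rewrite /Dz; apply: contra => /eqP h0; apply/eqP; rewrite -h0; ring.
have Dki : Dz k i j != 0 by move: hD; rewrite /Dz; apply: contra => /eqP h0; apply/eqP; rewrite -h0; ring.
have mi0 : mu (inord i) = 0 by apply: (solve3 e1 ex ey); exact: hD'.
have mj0 : mu (inord j) = 0.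
  apply: (@solve3 _ (mu (inord k)) (mu (inord i)) _ _ _ _ _ _ _ _ _ (hD' _ _ _ Dji)).
  - by rewrite -e1; ring.
  - by rewrite -ex; ring.
  - by rewrite -ey; ring.
have mk0 : mu (inord k) = 0.
  apply: (@solve3 _ (mu (inord i)) (mu (inord j)) _ _ _ _ _ _ _ _ _ (hD' _ _ _ Dki)).
  - by rewrite -e1; ring.
  - by rewrite -ex; ring.
  - by rewrite -ey; ring.
move=> l; case: (boolP (l \in mk [:: i; j; k])) => [|/hout //].
rewrite in_mk !inE => /or3P[]/eqP E; rewrite -(inord_val l) E //.
Qed.

Definition seps : seq (seq nat * seq nat * (int * int * int)) := [::
  ([:: 0; 1; 3]%nat, [:: 1; 3; 4]%nat, ((-4), (-4), (-12)));
  ([:: 0; 1; 3]%nat, [:: 1; 2; 4]%nat, ((0), (-12), (-12)));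
  ([:: 0; 1; 3]%nat, [:: 2; 4; 5]%nat, ((1), (-1), (-3)));
  ([:: 0; 1; 3]%nat, [:: 0; 2; 5]%nat, ((1), (0), (0)));
  ([:: 0; 1; 3]%nat, [:: 0; 3; 5]%nat, ((1), (6), (-12)));
  ([:: 1; 3; 4]%nat, [:: 0; 1; 3]%nat, ((1), (1), (3)));
  ([:: 1; 3; 4]%nat, [:: 1; 2; 4]%nat, ((5), (2), (12)));
  ([:: 1; 3; 4]%nat, [:: 2; 4; 5]%nat, ((1), (0), (0)));
  ([:: 1; 3; 4]%nat, [:: 0; 2; 5]%nat, ((1), (1), (-1)));
  ([:: 1; 3; 4]%nat, [:: 0; 3; 5]%nat, ((1), (2), (0)));
  ([:: 1; 2; 4]%nat, [:: 0; 1; 3]%nat, ((-12), (12), (-12)));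
  ([:: 1; 2; 4]%nat, [:: 1; 3; 4]%nat, ((-5), (-2), (-12)));
  ([:: 1; 2; 4]%nat, [:: 2; 4; 5]%nat, ((5), (-2), (-12)));
  ([:: 1; 2; 4]%nat, [:: 0; 2; 5]%nat, ((1), (1), (-1)));
  ([:: 1; 2; 4]%nat, [:: 0; 3; 5]%nat, ((-5), (11), (-3)));
  ([:: 2; 4; 5]%nat, [:: 0; 1; 3]%nat, ((-12), (1), (-2)));
  ([:: 2; 4; 5]%nat, [:: 1; 3; 4]%nat, ((-12), (-2), (-12)));
  ([:: 2; 4; 5]%nat, [:: 1; 2; 4]%nat, ((-5), (2), (12)));
  ([:: 2; 4; 5]%nat, [:: 0; 2; 5]%nat, ((-4), (4), (12)));
  ([:: 2; 4; 5]%nat, [:: 0; 3; 5]%nat, ((-8), (12), (12)));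
  ([:: 0; 2; 5]%nat, [:: 0; 1; 3]%nat, ((-12), (-6), (12)));
  ([:: 0; 2; 5]%nat, [:: 1; 3; 4]%nat, ((-12), (-12), (-12)));
  ([:: 0; 2; 5]%nat, [:: 1; 2; 4]%nat, ((-12), (-12), (12)));
  ([:: 0; 2; 5]%nat, [:: 2; 4; 5]%nat, ((1), (-1), (-3)));
  ([:: 0; 2; 5]%nat, [:: 0; 3; 5]%nat, ((-1), (6), (-12)));
  ([:: 0; 3; 5]%nat, [:: 0; 1; 3]%nat, ((-1), (-6), (12)));
  ([:: 0; 3; 5]%nat, [:: 1; 3; 4]%nat, ((-8), (-12), (-12)));
  ([:: 0; 3; 5]%nat, [:: 1; 2; 4]%nat, ((-5), (-12), (-2)));
  ([:: 0; 3; 5]%nat, [:: 2; 4; 5]%nat, ((1), (-5), (9)));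
  ([:: 0; 3; 5]%nat, [:: 0; 2; 5]%nat, ((1), (-6), (12)))].
Definition sepd (T1 T2 : seq nat) : int * int * int :=
  head (0, 0, 0) [seq x.2 | x <- seps & (x.1.1 == T1) && (x.1.2 == T2)].

Lemma seps_ok : all (fun T1 => all (fun T2 => (T1 == T2) || sepchk T1 T2 (sepd T1 T2)) tris) tris.
Proof. by vm_compute. Qed.

Lemma affs_ok : all affchk tris.
Proof. by vm_compute. Qed.

Lemma emb : embeds_in_R2 Kc pp.
Proof.
split.
  move=> s /Kc_face [T TT sT]; apply: aff_sub sT _; exact: aff_ok (allP affs_ok T TT).
move=> s t x /Kc_face [T1 T1T sT1] /Kc_face [T2 T2T tT2].
apply: transfer sT1 tT2 (aff_ok (allP affs_ok T1 T1T)) (aff_ok (allP affs_ok T2 T2T)) _.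
have := allP (allP seps_ok T1 T1T) T2 T2T.
case/orP => [/eqP <-|h]; last exact: sepchk_ok h.
by rewrite setIid.
Qed.

Theorem mainTheorem14 :
  exists (n : nat) (K : {set {set 'I_n}}) (p : 'I_n -> 'rV[R]_2)
         (c : {set 'I_n} -> R),
    is_complex K /\ is_2dim K /\ embeds_in_R2 K p /\ is_cycle K c /\
    min_cut_is K c 3 /\
    lp_min_is K c (3%:R / 2%:R) /\
    dual_max_is K c (3%:R / 2%:R).
Proof.
exists 6%nat, Kc, pp, cc.
split; first exact: Kc_complex.
split; first exact: Kc_2dim.
split; first exact: emb.
split; first exact: cc_cycle.
split; first exact: mc3.
have hlow : forall phi, lp_feasible Kc cc phi -> 3%:R / 2%:R <= norm1 Kc phi.
  by move=> phi hphi; exact: weak_dual hphi Bs_feas.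
split.
  split; last exact: hlow.
  exists phis; split; first exact: phis_feas.
  by apply/le_anti; rewrite phis_norm hlow //; exact: phis_feas.
split; first by exists Bs; exact: Bs_feas.
move=> B r hB; apply: le_trans (weak_dual phis_feas hB) _; exact: phis_norm.
Qed.
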